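(* Let $n,m\ge 1$, $a\in\mathbb{R}^n$, $d\in\mathbb{R}^m$ with $\|a\|\le\|d\|$ and $m>1$. Let $$H=\{(x,y)\in\mathbb{R}^{n+m} : a^\mathsf{T} x+d^\mathsf{T} y=-1\},\qquad S_{\le 0}=\{(x,y)\in\mathbb{R}^{n+m} : \|x\|\le\|y\|,\ a^\mathsf{T} x+d^\mathsf{T} y\le 0\}.$$ Let $(\bar x,\bar y)\in\mathbb{R}^{n+m}$ satisfy $\|\bar x\|>\|\bar y\|$ and $a^\mathsf{T}\bar x+d^\mathsf{T}\bar y=-1$, and let $\lambda=\bar x/\|\bar x\|$. Define $$G(\lambda)=\{\beta\in\mathbb{R}^m : \|\beta\|=1,\ a^\mathsf{T}\lambda+d^\mathsf{T}\beta\le 0\},\qquad C_{G(\lambda)}=\{(x,y)\in\mathbb{R}^{n+m} : -\lambda^\mathsf{T} x+\beta^\mathsf{T} y\le 0\ \ \forall \beta\in G(\lambda)\}.$$ Then $C_{G(\lambda)}$ is maximal $S_{\le 0}$-free with respect to $H$, and $(\bar x,\bar y)\in\operatorname{int}(C_{G(\lambda)})$.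
   Context: $\|\cdot\|$ is the Euclidean norm. For a closed set $S\subseteq\mathbb{R}^N$, a convex set $C\subseteq\mathbb{R}^N$ is $S$-free if $\operatorname{int}(C)\cap S=\emptyset$. Given an affine hyperplane $H$, a closed convex set $C$ is $S$-free with respect to $H$ if $C\cap H$ is $(S\cap H)$-free with respect to the induced topology of $H$ (i.e. the interior of $C\cap H$ relative to $H$ does not meet $S$); it is maximal $S$-free with respect to $H$ if for every closed convex $C'\supseteq C$ that is $S$-free with respect to $H$ one has $C'\cap H\subseteq C\cap H$. *)

(* Defs.v *)
(* R : realType, points of R^N are row vectors 'rV[R]_N,
   a point (x,y) of R^(n+m) is row_mx x y; x = lsubmx p, y = rsubmx p. *)
From HB Require Import structures.
From mathcomp Require Import all_boot all_order all_algebra.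
From mathcomp Require Import all_classical all_reals.
Set Implicit Arguments. Unset Strict Implicit. Unset Printing Implicit Defensive.
Import Order.TTheory GRing.Theory Num.Theory.
Local Open Scope classical_set_scope.
Local Open Scope ring_scope.

Section Defs.
Variable R : realType.

Definition dotv (N : nat) (u v : 'rV[R]_N) : R := \sum_(i < N) u 0 i * v 0 i.
Definition enorm (N : nat) (u : 'rV[R]_N) : R := Num.sqrt (dotv u u).

Definition eball (N : nat) (c : 'rV[R]_N) (r : R) : set 'rV[R]_N :=
  [set p | enorm (p - c) < r].

Definition einterior (N : nat) (A : set 'rV[R]_N) : set 'rV[R]_N :=
  [set p | exists2 r : R, 0 < r & eball p r `<=` A].
Definition eopen (N : nat) (A : set 'rV[R]_N) : Prop := A `<=` einterior A.
Definition eclosed (N : nat) (A : set 'rV[R]_N) : Prop := eopen (~` A).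

Definition convex_set (N : nat) (A : set 'rV[R]_N) : Prop :=
  forall p q (t : R), A p -> A q -> 0 <= t -> t <= 1 -> A (t *: p + (1 - t) *: q).

Definition rel_interior (N : nat) (H A : set 'rV[R]_N) : set 'rV[R]_N :=
  [set p | H p /\ A p /\ exists2 r : R, 0 < r & eball p r `&` H `<=` A].

Definition S_free (N : nat) (S C : set 'rV[R]_N) : Prop := einterior C `&` S = set0.

Definition S_free_wrt (N : nat) (H S C : set 'rV[R]_N) : Prop :=
  rel_interior H (C `&` H) `&` (S `&` H) = set0.

Definition maximal_S_free_wrt (N : nat) (H S C : set 'rV[R]_N) : Prop :=
  [/\ eclosed C, convex_set C, S_free_wrt H S C &
      forall C' : set 'rV[R]_N, eclosed C' -> convex_set C' -> C `<=` C' ->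
        S_free_wrt H S C' -> C' `&` H `<=` C `&` H].

Definition hypH (n m : nat) (a : 'rV[R]_n) (d : 'rV[R]_m) : set 'rV[R]_(n + m) :=
  [set p | dotv a (lsubmx p) + dotv d (rsubmx p) = -1].

Definition S_le0 (n m : nat) (a : 'rV[R]_n) (d : 'rV[R]_m) : set 'rV[R]_(n + m) :=
  [set p | enorm (lsubmx p) <= enorm (rsubmx p) /\
           dotv a (lsubmx p) + dotv d (rsubmx p) <= 0].

Definition Gset (n m : nat) (a : 'rV[R]_n) (d : 'rV[R]_m) (lam : 'rV[R]_n) : set 'rV[R]_m :=
  [set beta | enorm beta = 1 /\ dotv a lam + dotv d beta <= 0].

Definition C_G (n m : nat) (lam : 'rV[R]_n) (G : set 'rV[R]_m) : set 'rV[R]_(n + m) :=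
  [set p | forall beta, G beta -> - dotv lam (lsubmx p) + dotv beta (rsubmx p) <= 0].

End Defs.

(* Main.v *)
Require Import Defs.
From HB Require Import structures.
From mathcomp Require Import all_boot all_order all_algebra.
From mathcomp Require Import all_classical all_reals.
From mathcomp Require Import ring lra.
Import Order.TTheory GRing.Theory Num.Theory.
Local Open Scope classical_set_scope.
Local Open Scope ring_scope.

Set Implicit Arguments. Unset Strict Implicit. Unset Printing Implicit Defensive.

Section Vec.
Variable R : realType.
Implicit Types (N : nat).
Lemma mul_self_ge0 (x : R) : 0 <= x * x.
Proof. by rewrite -expr2 sqr_ge0. Qed.

Lemma dotvC N (u v : 'rV[R]_N) : dotv u v = dotv v u.
Proof. by apply: eq_bigr => i _; rewrite mulrC. Qed.
Lemma dotvDl N (u v w : 'rV[R]_N) : dotv (u + v) w = dotv u w + dotv v w.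
Proof. by rewrite /dotv -big_split; apply: eq_bigr => i _; rewrite mxE mulrDl. Qed.
Lemma dotvDr N (u v w : 'rV[R]_N) : dotv w (u + v) = dotv w u + dotv w v.
Proof. by rewrite dotvC dotvDl !(dotvC w). Qed.
Lemma dotvZl N c (u w : 'rV[R]_N) : dotv (c *: u) w = c * dotv u w.
Proof. by rewrite /dotv mulr_sumr; apply: eq_bigr => i _; rewrite mxE mulrA. Qed.
Lemma dotvZr N c (u w : 'rV[R]_N) : dotv w (c *: u) = c * dotv w u.
Proof. by rewrite dotvC dotvZl dotvC. Qed.
Lemma dotvNl N (u w : 'rV[R]_N) : dotv (- u) w = - dotv u w.
Proof. by rewrite -scaleN1r dotvZl mulN1r. Qed.
Lemma dotvNr N (u w : 'rV[R]_N) : dotv w (- u) = - dotv w u.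
Proof. by rewrite dotvC dotvNl dotvC. Qed.
Lemma dotvBl N (u v w : 'rV[R]_N) : dotv (u - v) w = dotv u w - dotv v w.
Proof. by rewrite dotvDl dotvNl. Qed.
Lemma dotvBr N (u v w : 'rV[R]_N) : dotv w (u - v) = dotv w u - dotv w v.
Proof. by rewrite dotvDr dotvNr. Qed.
Lemma dotv0l N (u : 'rV[R]_N) : dotv 0 u = 0.
Proof. by rewrite /dotv big1 // => i _; rewrite mxE mul0r. Qed.
Lemma dotv0r N (u : 'rV[R]_N) : dotv u 0 = 0.
Proof. by rewrite dotvC dotv0l. Qed.
Lemma dotv_ge0 N (u : 'rV[R]_N) : 0 <= dotv u u.
Proof. by apply: sumr_ge0 => i _; apply: mul_self_ge0. Qed.
Lemma dotv_eq0 N (u : 'rV[R]_N) : dotv u u = 0 -> u = 0.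
Proof.
move=> h; apply/matrixP => i j; rewrite mxE (ord1 i).
have := psumr_eq0P (fun k _ => mul_self_ge0 (u 0 k)) h (i:=j) isT.
by move/eqP; rewrite mulf_eq0 orbb => /eqP.
Qed.
Lemma enorm_ge0 N (u : 'rV[R]_N) : 0 <= enorm u.
Proof. exact: sqrtr_ge0. Qed.
Lemma enorm_sq N (u : 'rV[R]_N) : enorm u ^+ 2 = dotv u u.
Proof. by rewrite /enorm sqr_sqrtr // dotv_ge0. Qed.

Lemma CS2 N (u v : 'rV[R]_N) : dotv u v ^+ 2 <= dotv u u * dotv v v.
Proof.
have [v0|] := eqVneq (dotv v v) 0.
  by rewrite (dotv_eq0 v0) !dotv0r mulr0 expr0n.
move=> vn0.
have vp : 0 < dotv v v by rewrite lt0r vn0 dotv_ge0.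
set t := - (dotv u v / dotv v v).
have := dotv_ge0 (u + t *: v).
rewrite !dotvDl !dotvDr !dotvZl !dotvZr (dotvC v u) /t.
move=> h.
have e : dotv u u + - (dotv u v / dotv v v) * dotv u v +
      (- (dotv u v / dotv v v) * dotv u v +
       - (dotv u v / dotv v v) * (- (dotv u v / dotv v v) * dotv v v)) =
       (dotv u u * dotv v v - dotv u v ^+ 2) / dotv v v.
  by field; rewrite vn0.
rewrite e in h.
by rewrite -subr_ge0; move: h; rewrite pmulr_lge0 // invr_gt0.
Qed.

Lemma CS N (u v : 'rV[R]_N) : `|dotv u v| <= enorm u * enorm v.
Proof.
rewrite /enorm -sqrtrM ?dotv_ge0 // -sqrtr_sqr ler_sqrt; last first.
  by rewrite mulr_ge0 ?dotv_ge0.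
exact: CS2.
Qed.
Lemma CSle N (u v : 'rV[R]_N) : dotv u v <= enorm u * enorm v.
Proof. apply: le_trans (CS u v); exact: ler_norm. Qed.
Lemma CSge N (u v : 'rV[R]_N) : - (enorm u * enorm v) <= dotv u v.
Proof. rewrite lerNl; apply: le_trans (CS u v); rewrite -normrN; exact: ler_norm. Qed.

Lemma enormZ N c (u : 'rV[R]_N) : enorm (c *: u) = `|c| * enorm u.
Proof.
by rewrite /enorm dotvZl dotvZr mulrA -expr2 sqrtrM ?sqr_ge0 // sqrtr_sqr.
Qed.
Lemma enormN N (u : 'rV[R]_N) : enorm (- u) = enorm u.
Proof. by rewrite -scaleN1r enormZ normrN normr1 mul1r. Qed.

Lemma dot_split n m (p q : 'rV[R]_(n + m)) :
  dotv p q = dotv (lsubmx p) (lsubmx q) + dotv (rsubmx p) (rsubmx q).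
Proof. by rewrite /dotv big_split_ord /=; congr (_ + _); apply: eq_bigr => i _; rewrite !mxE. Qed.

Lemma enorm_l n m (p : 'rV[R]_(n + m)) : enorm (lsubmx p) <= enorm p.
Proof.
rewrite /enorm ler_sqrt ?dotv_ge0 // (dot_split p p) lerDl; exact: dotv_ge0.
Qed.
Lemma enorm_r n m (p : 'rV[R]_(n + m)) : enorm (rsubmx p) <= enorm p.
Proof.
rewrite /enorm ler_sqrt ?dotv_ge0 // (dot_split p p) lerDr; exact: dotv_ge0.
Qed.

Lemma lsubD n m (p q : 'rV[R]_(n + m)) : lsubmx (p + q) = lsubmx p + lsubmx q.
Proof. by apply/matrixP => i j; rewrite !mxE. Qed.
Lemma rsubD n m (p q : 'rV[R]_(n + m)) : rsubmx (p + q) = rsubmx p + rsubmx q.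
Proof. by apply/matrixP => i j; rewrite !mxE. Qed.
Lemma lsubZ n m c (p : 'rV[R]_(n + m)) : lsubmx (c *: p) = c *: lsubmx p.
Proof. by apply/matrixP => i j; rewrite !mxE. Qed.
Lemma rsubZ n m c (p : 'rV[R]_(n + m)) : rsubmx (c *: p) = c *: rsubmx p.
Proof. by apply/matrixP => i j; rewrite !mxE. Qed.
Lemma lsubN n m (p : 'rV[R]_(n + m)) : lsubmx (- p) = - lsubmx p.
Proof. by apply/matrixP => i j; rewrite !mxE. Qed.
Lemma rsubN n m (p : 'rV[R]_(n + m)) : rsubmx (- p) = - rsubmx p.
Proof. by apply/matrixP => i j; rewrite !mxE. Qed.
Lemma lsubB n m (p q : 'rV[R]_(n + m)) : lsubmx (p - q) = lsubmx p - lsubmx q.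
Proof. by rewrite lsubD lsubN. Qed.
Lemma rsubB n m (p q : 'rV[R]_(n + m)) : rsubmx (p - q) = rsubmx p - rsubmx q.
Proof. by rewrite rsubD rsubN. Qed.

End Vec.

Section V2.
Variable R : realType.
Implicit Types (N : nat).

Lemma enorm1 N (u : 'rV[R]_N) : enorm u = 1 <-> dotv u u = 1.
Proof.
split=> h; first by rewrite -enorm_sq h expr1n.
by rewrite /enorm h sqrtr1.
Qed.

Lemma normalize N (w : 'rV[R]_N) : 0 < dotv w w ->
  dotv ((Num.sqrt (dotv w w))^-1 *: w) ((Num.sqrt (dotv w w))^-1 *: w) = 1.
Proof.
move=> h; rewrite dotvZl dotvZr mulrA -expr2 exprVn sqr_sqrtr ?dotv_ge0 //.
by rewrite mulVf // gt_eqF.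
Qed.

Lemma dotv_delta N (v : 'rV[R]_N) j : dotv v (delta_mx 0 j) = v 0 j.
Proof.
rewrite /dotv (bigD1 j) //= big1 ?addr0; first by rewrite mxE !eqxx mulr1.
by move=> i /negbTE hi; rewrite mxE hi andbF mulr0.
Qed.

Lemma perp N (v : 'rV[R]_N) : (1 < N)%N -> exists w, dotv w w = 1 /\ dotv v w = 0.
Proof.
move=> hN.
have h0 : (0 < N)%N by apply: leq_trans hN.
pose i0 := Ordinal h0. pose i1 := Ordinal hN.
have [v0|v0] := eqVneq (v 0 i0) 0.
  by exists (delta_mx 0 i0); rewrite !dotv_delta v0 mxE !eqxx.
have d01 : (i0 == i1) = false by apply/negbTE; rewrite -val_eqE.
pose w0 := v 0 i1 *: delta_mx 0 i0 - v 0 i0 *: delta_mx 0 i1 : 'rV[R]_N.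
have hw0 : dotv w0 w0 = v 0 i1 ^+ 2 + v 0 i0 ^+ 2.
  rewrite /w0 !(dotvBl, dotvBr, dotvZl, dotvZr, dotv_delta) !mxE !eqxx d01 eq_sym d01 /=.
  ring.
have hp : 0 < dotv w0 w0.
  rewrite hw0; apply: ltr_wpDl; first exact: sqr_ge0.
  by rewrite exprn_even_gt0.
exists ((Num.sqrt (dotv w0 w0))^-1 *: w0); split; first exact: normalize.
rewrite dotvZr /w0 !(dotvBr, dotvZr, dotv_delta).
by rewrite [_ * v 0 i0]mulrC subrr mulr0.
Qed.

End V2.

Section V3.
Variable R : realType.
Implicit Types (N : nat).

Lemma perp_comp m (d y : 'rV[R]_m) : (1 < m)%N -> 0 < enorm d ->
  exists f, [/\ dotv f f = 1, dotv d f = 0, 0 <= dotv f y &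
     (dotv d y / enorm d)^+2 + (dotv f y)^+2 = dotv y y].
Proof.
move=> hm Dp.
set D := enorm d.
have dD : dotv d d = D^+2 by rewrite enorm_sq.
have Dn0 : D != 0 by rewrite gt_eqF.
set ye := dotv d y / D.
set yp := y - (ye / D) *: d.
have hyp : dotv yp yp = dotv y y - ye^+2.
  rewrite /yp !(dotvBl, dotvBr, dotvZl, dotvZr) (dotvC y d) dD /ye; field; done.
have hdp : dotv d yp = 0.
  rewrite /yp !(dotvBr, dotvZr) dD /ye; field; done.
have hpy : dotv yp y = dotv yp yp.
  rewrite hyp /yp !(dotvBl, dotvZl) /ye; field; done.
have [pos|npos] := ltrP 0 (dotv yp yp).
  set s := Num.sqrt (dotv yp yp).
  have s2 : s^+2 = dotv yp yp by rewrite sqr_sqrtr ?dotv_ge0.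
  have sp : 0 < s by rewrite sqrtr_gt0.
  exists (s^-1 *: yp); split.
  - exact: normalize.
  - by rewrite dotvZr hdp mulr0.
  - by rewrite dotvZl hpy -s2; apply: mulr_ge0; [rewrite invr_ge0 ltW|apply: sqr_ge0].
  - rewrite dotvZl hpy -s2 -/ye.
    have -> : s^-1 * s^+2 = s by field; rewrite gt_eqF.
    by rewrite s2 hyp; ring.
have z : dotv yp yp = 0 by apply/le_anti; rewrite npos dotv_ge0.
have yp0 := dotv_eq0 z.
have ey : y = (ye / D) *: d by apply/eqP; rewrite -subr_eq0 -/yp yp0.
have [f [f1 df]] := perp d hm.
exists f; split=> //.
- by rewrite ey dotvZr (dotvC f d) df mulr0.
- rewrite -/ye ey dotvZr (dotvC f d) df mulr0 expr0n /= addr0.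
  have : dotv y y - ye^+2 = 0 by rewrite -hyp.
  by rewrite -ey; lra.
Qed.

End V3.

Section Sc.
Variable R : realType.
Lemma sq_le (a b : R) : 0 <= a -> a <= b -> a^+2 <= b^+2.
Proof. move=> a0 ab; rewrite ler_sqr ?nnegrE //; lra. Qed.
Lemma sq_le_inv (a b : R) : 0 <= a -> 0 <= b -> a^+2 <= b^+2 -> a <= b.
Proof. by move=> a0 b0; rewrite ler_sqr ?nnegrE. Qed.

Lemma scal_V (D mu r Y ye yf : R) :
  0 < D -> 0 <= r -> r^+2 + mu^+2 = D^+2 -> 0 <= yf -> ye^+2 + yf^+2 = Y^+2 ->
  0 <= Y -> -mu*Y < D*ye -> 0 <= r * ye + mu * yf.
Proof.
move=> D0 r0 hr yf0 hy Y0 hc.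
have [mu0|mu0] := lerP 0 mu.
  have [ye0|ye0] := lerP 0 ye.
    by apply: addr_ge0; apply: mulr_ge0.
  have h1 : D * (- ye) < mu * Y by lra.
  have h2 : D^+2 * ye^+2 <= mu^+2 * Y^+2.
    have := sq_le (a:=D * - ye) (b:=mu*Y) _ (ltW h1).
    rewrite !exprMn sqrrN; apply; apply: mulr_ge0; lra.
  have h3 : r^+2 * ye^+2 <= mu^+2 * yf^+2.
    have e1 : r^+2 * ye^+2 = D^+2*ye^+2 - mu^+2*ye^+2 by rewrite -hr; ring.
    have e2 : mu^+2*yf^+2 = mu^+2*Y^+2 - mu^+2*ye^+2 by rewrite -hy; ring.
    lra.
  have := sq_le_inv (a := r * - ye) (b := mu * yf).
  rewrite !exprMn sqrrN => hh.
  have : r * - ye <= mu * yf by apply: hh; [apply: mulr_ge0; lra|apply: mulr_ge0; lra|lra].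
  lra.
have h1 : - mu * Y < D * ye by lra.
have ye0 : 0 < ye by nra.
have h2 : mu^+2 * Y^+2 <= D^+2 * ye^+2.
  have := sq_le (a:= - mu * Y) (b:=D*ye) _ (ltW h1).
  rewrite !exprMn sqrrN; apply; apply: mulr_ge0; lra.
have h3 : mu^+2 * yf^+2 <= r^+2 * ye^+2.
  have e1 : r^+2 * ye^+2 = D^+2*ye^+2 - mu^+2*ye^+2 by rewrite -hr; ring.
  have e2 : mu^+2*yf^+2 = mu^+2*Y^+2 - mu^+2*ye^+2 by rewrite -hy; ring.
  lra.
have := sq_le_inv (a := - mu * yf) (b := r * ye).
rewrite !exprMn sqrrN => hh.
have : - mu * yf <= r * ye by apply: hh; [apply: mulr_ge0; lra|apply: mulr_ge0; lra|lra].
lra.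
Qed.

Lemma scal_core (D mu r Y ye yf t W : R) :
  0 < D -> 0 <= r -> r^+2 + mu^+2 = D^+2 -> 0 <= yf -> ye^+2 + yf^+2 = Y^+2 ->
  0 <= Y -> 0 <= W -> t^+2 + W^+2 <= Y^+2 -> D*ye <= -mu*t + r*W ->
  -mu*Y < D*ye -> D*t <= -mu*ye + r*yf.
Proof.
move=> D0 r0 hr yf0 hy Y0 W0 hP h1 hc.
have V0 := scal_V D0 r0 hr yf0 hy Y0 hc.
have muD : mu <= D.
  have [m0|m0] := lerP mu 0; first lra.
  apply: sq_le_inv; try lra. have := sqr_ge0 r; lra.
have [yfz|yfp] := eqVneq yf 0.
  subst yf.
  have eY : ye = Y.
    have : (ye - Y) * (ye + Y) = 0 by nra.
    move/eqP; rewrite mulf_eq0 => /orP[/eqP|/eqP] h; first lra.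
    have : ye = - Y by lra.
    move=> e; rewrite e in hc.
    have : 0 <= (D - mu) * Y by apply: mulr_ge0; lra.
    lra.
  subst ye.
  have : (D * t + mu * Y)^+2 + (D * W - r * Y)^+2 <= 0.
    have e : (D * t + mu * Y)^+2 + (D * W - r * Y)^+2 =
       D^+2*(t^+2+W^+2) - 2*(D*Y)*(-mu * t + r * W) + (r^+2+mu^+2)*Y^+2 by ring.
    have k1 : D^+2*(t^+2+W^+2) <= D^+2*Y^+2 by apply: ler_wpM2l => //; apply: sqr_ge0.
    have k2 : (D*Y)*(D*Y) <= (D*Y)*(-mu * t + r * W).
      apply: ler_wpM2l => //; apply: mulr_ge0; lra.
    rewrite e hr. have e2 : (D*Y)*(D*Y) = D^+2*Y^+2 by ring. lra.
  move=> hh.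
  have hh2 : (D * t + mu * Y)^+2 <= 0.
    have := sqr_ge0 (D * W - r * Y); lra.
  have : D * t + mu * Y = 0.
    apply/eqP; rewrite -sqrf_eq0; apply/eqP; apply/le_anti; rewrite hh2 sqr_ge0 //.
  lra.
have yfp' : 0 < yf by rewrite lt0r yfp.
set G := - mu * ye + r * yf.
set V := r * ye + mu * yf.
have eGV : G^+2 + V^+2 = D^+2 * Y^+2 by rewrite /G /V -hy -hr; ring.
have cs : t * G + W * V <= D * Y^+2.
  have cs2 : (t * G + W * V)^+2 <= (D * Y^+2)^+2.
    have : (t * G + W * V)^+2 <= (t^+2 + W^+2) * (G^+2 + V^+2).
      have : 0 <= (t * V - W * G)^+2 by apply: sqr_ge0.
      nra.
    rewrite eGV => hh.
    apply: le_trans hh _.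
    have : 0 <= D^+2 * Y^+2 by nra.
    nra.
  have : 0 <= D * Y^+2 by nra.
  move=> hpos.
  have [hn|hn] := lerP (t * G + W * V) 0; first lra.
  rewrite -ler_sqr ?nnegrE; [exact: cs2|lra|lra].
have id1 : D^+2 * yf * t = r * (t * G + W * V) - V * (- mu * t + r * W).
  by rewrite -hr /G /V; ring.
have id2 : r * Y^+2 - V * ye = yf * G by rewrite /G /V -hy; ring.
have k1 : D^+2 * yf * t <= r * (D * Y^+2) - V * (D * ye).
  rewrite id1; apply: lerB.
    by apply: ler_wpM2l.
  by apply: ler_wpM2l.
have k2 : D^+2 * yf * t <= D * (yf * G).
  by rewrite -id2; move: k1; rewrite mulrBr; nra.
have : D * yf * (D * t) <= D * yf * G by move: k2; nra.
rewrite ler_pM2l //; exact: mulr_gt0.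
Qed.
End Sc.

Section V4.
Variable R : realType.
Implicit Types (N : nat).

Lemma enorm_eq0 N (u : 'rV[R]_N) : enorm u <= 0 -> u = 0.
Proof.
move=> h; apply: dotv_eq0; rewrite -enorm_sq.
have : enorm u = 0 by apply/le_anti; rewrite h enorm_ge0.
by move=> ->; rewrite expr0n.
Qed.

Lemma Dpos n m (a : 'rV[R]_n) (d : 'rV[R]_m) x y :
  enorm a <= enorm d -> dotv a x + dotv d y = -1 -> 0 < enorm d.
Proof.
move=> ad h; rewrite ltNge; apply/negP => hd.
have d0 := enorm_eq0 hd.
have a0 : a = 0 by apply: enorm_eq0; apply: le_trans ad hd.
by move: h; rewrite a0 d0 !dotv0l addr0 => /eqP; rewrite eq_sym oppr_eq0 oner_eq0.
Qed.

Lemma partC n m (a : 'rV[R]_n) (d : 'rV[R]_m) lam x y :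
  (1 < m)%N -> enorm a <= enorm d -> dotv lam lam = 1 -> enorm x <= enorm y ->
  dotv a x + dotv d y = -1 ->
  exists beta, Gset a d lam beta /\ dotv lam x <= dotv beta y.
Proof.
move=> hm ad l1 xy hH.
have Dp := Dpos ad hH.
set D := enorm d.
have dD : dotv d d = D^+2 by rewrite enorm_sq.
have Dn0 : D != 0 by rewrite gt_eqF.
have nl : enorm lam = 1 by apply/enorm1.
set Y := enorm y.
have Yp : 0 < Y.
  rewrite ltNge; apply/negP => hY.
  have y0 := enorm_eq0 hY.
  have x0 : x = 0 by apply: enorm_eq0; apply: le_trans xy hY.
  by move: hH; rewrite x0 y0 !dotv0r addr0 => /eqP; rewrite eq_sym oppr_eq0 oner_eq0.
have Yn0 : Y != 0 by rewrite gt_eqF.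
have yY : dotv y y = Y^+2 by rewrite enorm_sq.
set mu := dotv a lam.
have muA : `|mu| <= D.
  by apply: le_trans (CS a lam) _; rewrite nl mulr1.
have mu2 : mu^+2 <= D^+2.
  by have := sq_le (normr_ge0 mu) muA; rewrite real_normK ?num_real.
have [c1|c2] := lerP (dotv d y) (- mu * Y).
  exists (Y^-1 *: y); split.
    split.
      by rewrite enormZ ger0_norm ?invr_ge0 ?ltW // mulVf.
    rewrite dotvZr -/mu.
    have : Y^-1 * dotv d y <= Y^-1 * (- mu * Y) by apply: ler_wpM2l => //; rewrite invr_ge0 ltW.
    have -> : Y^-1 * (- mu * Y) = - mu by field.
    lra.
  rewrite dotvZl yY.
  have -> : Y^-1 * Y^+2 = Y by field.
  apply: le_trans (CSle lam x) _; rewrite nl mul1r; exact: xy.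
have [f [f1 df fy0 fy]] := perp_comp y hm Dp.
rewrite -/D in fy.
set t := dotv lam x.
set w := x - t *: lam.
have lw : dotv lam w = 0 by rewrite /w dotvBr dotvZr l1 mulr1 /t subrr.
have ww : dotv w w = dotv x x - t^+2.
  by rewrite /w !(dotvBl, dotvBr, dotvZl, dotvZr) l1 (dotvC x lam) -/t; ring.
set W := enorm w.
have hP : t^+2 + W^+2 <= Y^+2.
  rewrite /W enorm_sq ww -yY -enorm_sq.
  have : enorm x ^+2 <= Y^+2 by apply: sq_le => //; apply: enorm_ge0.
  rewrite enorm_sq; lra.
set r := Num.sqrt (D^+2 - mu^+2).
have r0 : 0 <= r by apply: sqrtr_ge0.
have hr : r^+2 + mu^+2 = D^+2 by rewrite /r sqr_sqrtr; [ring|lra].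
set a' := a - mu *: lam.
have aa : dotv a' a' <= r^+2.
  rewrite /a' !(dotvBl, dotvBr, dotvZl, dotvZr) l1 (dotvC lam a) -/mu.
  have : dotv a a <= D^+2 by rewrite -enorm_sq; apply: sq_le => //; apply: enorm_ge0.
  lra.
have na : enorm a' <= r.
  apply: (@le_trans _ _ (Num.sqrt (r^+2))).
    by rewrite /enorm ler_sqrt ?sqr_ge0.
  by rewrite sqrtr_sqr ger0_norm.
have ax : dotv a x = dotv a' w + t * mu.
  rewrite /w /a' !(dotvBl, dotvBr, dotvZl, dotvZr) l1 -/mu -/t; ring.
have aw : - (r * W) <= dotv a' w.
  apply: le_trans (CSge a' w); rewrite lerN2; apply: ler_wpM2r => //; exact: enorm_ge0.
set ye := dotv d y / D.
have hye : D * ye = dotv d y by rewrite /ye; field.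
have h1 : D * ye <= - mu * t + r * W by lra.
have hc : - mu * Y < D * ye by lra.
have fy' : ye^+2 + (dotv f y)^+2 = Y^+2 by rewrite fy yY.
have key := scal_core Dp r0 hr fy0 fy' (ltW Yp) (enorm_ge0 w) hP h1 hc.
exists ((- mu / D^+2) *: d + (r / D) *: f); split.
  split.
    apply/enorm1.
    rewrite !(dotvDl, dotvDr, dotvZl, dotvZr) dD f1 df (dotvC f d) df.
    have e1 : (1:R) = (r^+2 + mu^+2) / D^+2 by rewrite hr divff // expf_neq0.
    by rewrite [RHS]e1; field.
  rewrite !(dotvDr, dotvZr) dD df -/mu.
  have -> : - mu / D^+2 * D^+2 = - mu by field.
  by rewrite mulr0 addr0 subrr.
rewrite !(dotvDl, dotvZl) -hye.
have -> : - mu / D^+2 * (D * ye) + r / D * dotv f y = (- mu * ye + r * dotv f y) / D by field.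
by rewrite ler_pdivlMr // mulrC.
Qed.

End V4.

Section V5.
Variable R : realType.
Implicit Types (N : nat).

Definition fb n m (lam : 'rV[R]_n) (beta : 'rV[R]_m) (p : 'rV[R]_(n + m)) :=
  - dotv lam (lsubmx p) + dotv beta (rsubmx p).

Lemma fbD n m (lam : 'rV[R]_n) (beta : 'rV[R]_m) p q :
  fb lam beta (p + q) = fb lam beta p + fb lam beta q.
Proof. rewrite /fb lsubD rsubD dotvDr dotvDr; ring. Qed.
Lemma fbZ n m (lam : 'rV[R]_n) (beta : 'rV[R]_m) c p :
  fb lam beta (c *: p) = c * fb lam beta p.
Proof. rewrite /fb lsubZ rsubZ dotvZr dotvZr; ring. Qed.
Lemma fbB n m (lam : 'rV[R]_n) (beta : 'rV[R]_m) p q :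
  fb lam beta (p - q) = fb lam beta p - fb lam beta q.
Proof. rewrite /fb lsubB rsubB dotvBr dotvBr; ring. Qed.

Lemma fb_le n m (lam : 'rV[R]_n) (beta : 'rV[R]_m) z :
  enorm lam = 1 -> enorm beta = 1 -> fb lam beta z <= 2 * enorm z.
Proof.
move=> l1 b1; rewrite /fb.
have h1 := CSge lam (lsubmx z). have h2 := CSle beta (rsubmx z).
have h3 := enorm_l z. have h4 := enorm_r z.
rewrite l1 b1 !mul1r in h1 h2; lra.
Qed.
Lemma fb_ge n m (lam : 'rV[R]_n) (beta : 'rV[R]_m) z :
  enorm lam = 1 -> enorm beta = 1 -> - (2 * enorm z) <= fb lam beta z.
Proof.
move=> l1 b1; rewrite /fb.
have h1 := CSle lam (lsubmx z). have h2 := CSge beta (rsubmx z).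
have h3 := enorm_l z. have h4 := enorm_r z.
rewrite l1 b1 !mul1r in h1 h2; lra.
Qed.

Lemma C_closed n m (lam : 'rV[R]_n) (G : set 'rV[R]_m) :
  enorm lam = 1 -> (forall beta, G beta -> enorm beta = 1) -> eclosed (C_G lam G).
Proof.
move=> l1 Gu p /= Cp.
have [beta Gb] : exists beta, G beta /\ 0 < fb lam beta p.
  apply: contra_notP Cp => hn beta Gb.
  rewrite leNgt; apply/negP => hlt; apply: hn; by exists beta.
case: Gb => Gb hp.
exists (fb lam beta p / 2); first by rewrite divr_gt0.
move=> q /= hq Cq.
have h1 : fb lam beta q <= 0 := Cq beta Gb.
have h2 : fb lam beta q = fb lam beta p + fb lam beta (q - p).
  by rewrite -fbD addrC subrK.
have := fb_ge (q - p) l1 (Gu _ Gb).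
move: hq; rewrite /eball /=; lra.
Qed.

Lemma C_convex n m (lam : 'rV[R]_n) (G : set 'rV[R]_m) : convex_set (C_G lam G).
Proof.
move=> p q t Cp Cq t0 t1 beta Gb.
rewrite -/(fb lam beta _) fbD !fbZ.
have := Cp beta Gb; have := Cq beta Gb.
rewrite -/(fb lam beta p) -/(fb lam beta q) => h1 h2.
have : 0 <= 1 - t by lra.
move=> h.
have h3 : 0 <= - fb lam beta p by lra.
have h4 : 0 <= - fb lam beta q by lra.
have := mulr_ge0 t0 h3.
have := mulr_ge0 h h4.
lra.
Qed.

End V5.

Section V6.
Variable R : realType.
Implicit Types (N : nat).

Lemma dot_row n m (u : 'rV[R]_n) (v : 'rV[R]_m) (q : 'rV[R]_(n + m)) :
  dotv (row_mx u v) q = dotv u (lsubmx q) + dotv v (rsubmx q).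
Proof. by rewrite dot_split row_mxKl row_mxKr. Qed.

Lemma interior_pt n m (lam : 'rV[R]_n) (G : set 'rV[R]_m) xb yb :
  enorm lam = 1 -> (forall beta, G beta -> enorm beta = 1) ->
  dotv lam xb = enorm xb -> enorm yb < enorm xb ->
  einterior (C_G lam G) (row_mx xb yb).
Proof.
move=> l1 Gu lx yx.
exists ((enorm xb - enorm yb) / 2); first by rewrite divr_gt0 // subr_gt0.
move=> q /= hq beta Gb.
rewrite -/(fb lam beta q).
have h2 : fb lam beta q = fb lam beta (row_mx xb yb) + fb lam beta (q - row_mx xb yb).
  by rewrite -fbD addrC subrK.
have := fb_le (q - row_mx xb yb) l1 (Gu _ Gb).
have h3 : fb lam beta (row_mx xb yb) <= - enorm xb + enorm yb.
  rewrite /fb row_mxKl row_mxKr lx.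
  have := CSle beta yb; rewrite (Gu _ Gb) mul1r; lra.
move: hq; rewrite /eball /=; lra.
Qed.

Lemma C_Sfree n m (a : 'rV[R]_n) (d : 'rV[R]_m) lam :
  (1 < m)%N -> enorm a <= enorm d -> dotv lam lam = 1 ->
  S_free_wrt (hypH a d) (S_le0 a d) (C_G lam (Gset a d lam)).
Proof.
move=> hm ad l1.
rewrite /S_free_wrt -subset0 => p [[Hp [[Cp _] [rho rp hb]]] [[Sxy _] _]].
have [beta [Gb hge]] := partC hm ad l1 Sxy Hp.
have Dp := Dpos ad Hp.
have fp0 : fb lam beta p = 0.
  apply/le_anti; rewrite (Cp beta Gb) /=; rewrite /fb; lra.
have b1 : dotv beta beta = 1 by apply/enorm1; case: Gb.
set w := row_mx (- lam) beta.
have hw : forall q, dotv w q = fb lam beta q by move=> q; rewrite dot_row dotvNl.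
set nv := row_mx a d.
have hnv : forall q, dotv nv q = dotv a (lsubmx q) + dotv d (rsubmx q) by move=> q; rewrite dot_row.
have nn : 0 < dotv nv nv.
  rewrite hnv row_mxKl row_mxKr; apply: ltr_wpDl; first exact: dotv_ge0.
  by rewrite -enorm_sq exprn_gt0.
have nn0 : dotv nv nv != 0 by rewrite gt_eqF.
set c := dotv w nv / dotv nv nv.
set v := w - c *: nv.
have nvv : dotv nv v = 0.
  by rewrite /v dotvBr dotvZr (dotvC nv w) /c; field.
have wv : dotv v v = dotv w v.
  by rewrite {1}/v dotvBl dotvZl nvv mulr0 subr0.
have vp : 0 < dotv v v.
  rewrite lt0r dotv_ge0 andbT; apply/negP => /eqP z.
  have v0 := dotv_eq0 z.
  have ew : w = c *: nv by apply/eqP; rewrite -subr_eq0 -/v v0.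
  have : dotv w p = - c by rewrite ew dotvZl hnv Hp mulrN1.
  rewrite hw fp0 => /eqP; rewrite eq_sym oppr_eq0 => /eqP c0.
  have : dotv w w = 2.
    rewrite dot_row row_mxKl row_mxKr dotvNl dotvNr opprK l1 b1; done.
  by rewrite ew c0 scale0r dotv0l => /eqP; rewrite eq_sym pnatr_eq0.
have nvp : 0 < enorm v by rewrite /enorm sqrtr_gt0.
set k := rho / (2 * enorm v).
have kp : 0 < k by rewrite divr_gt0 // mulr_gt0.
have [Cq _] : (C_G lam (Gset a d lam) `&` hypH a d) (p + k *: v).
  apply: hb; split.
    rewrite /eball /= addrC addKr enormZ ger0_norm ?ltW // /k.
    have -> : rho / (2 * enorm v) * enorm v = rho / 2 by field; rewrite gt_eqF.
    lra.
  rewrite /hypH /= -hnv dotvDr dotvZr nvv mulr0 addr0 hnv; exact: Hp.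
have := Cq beta Gb.
rewrite -/(fb lam beta _) -hw dotvDr dotvZr hw fp0 add0r -wv.
rewrite leNgt => /negP; apply; exact: mulr_gt0.
Qed.

End V6.

Section V7.
Variable R : realType.
Implicit Types (N : nat).

Lemma small2 (a b : R) : 0 < a -> 0 < b -> exists k, [/\ 0 < k, k <= a & k <= b].
Proof.
move=> ap bp; exists (a * b / (a + b)); split.
- by rewrite divr_gt0 ?mulr_gt0 ?addr_gt0.
- rewrite ler_pdivrMr ?addr_gt0 //; nra.
- rewrite ler_pdivrMr ?addr_gt0 //; nra.
Qed.

Lemma rot_step m (d y b0 w : 'rV[R]_m) (mu s : R) :
  dotv b0 b0 = 1 -> dotv w w = 1 -> dotv b0 w = 0 -> dotv d b0 = - mu ->
  s < dotv b0 y ->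
  (exists k, [/\ 0 < k, k <= 1, 4 * k * enorm y < dotv b0 y - s & mu * k + dotv d w < 0]) ->
  exists b, [/\ dotv b b = 1, dotv d b < - mu & s < dotv b y].
Proof.
move=> b1 w1 bw db sb [k [kp k1 kg kd]].
have kk : 0 < 1 + k^+2 by nra.
have kk0 : 1 + k^+2 != 0 by rewrite gt_eqF.
exists (((1 - k^+2) / (1 + k^+2)) *: b0 + (2 * k / (1 + k^+2)) *: w); split.
- rewrite !(dotvDl, dotvDr, dotvZl, dotvZr) b1 w1 bw (dotvC w b0) bw.
  by field.
- rewrite !(dotvDr, dotvZr) db.
  rewrite -subr_gt0.
  have -> : - mu - ((1 - k ^+ 2) / (1 + k ^+ 2) * - mu + 2 * k / (1 + k ^+ 2) * dotv d w)
     = (- 2 * k * (mu * k + dotv d w)) / (1 + k^+2) by field.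
  apply: divr_gt0 => //; nra.
- rewrite !(dotvDl, dotvZl).
  set B := dotv b0 y in sb kg *. set Om := dotv w y. set Y := enorm y in kg *.
  have hB : B >= - Y by have := CSge b0 y; rewrite -/Y (_ : enorm b0 = 1) ?mul1r //; apply/enorm1.
  have hB' : B <= Y by have := CSle b0 y; rewrite -/Y (_ : enorm b0 = 1) ?mul1r //; apply/enorm1.
  have hO : Om >= - Y by have := CSge w y; rewrite -/Y (_ : enorm w = 1) ?mul1r //; apply/enorm1.
  have Y0 : 0 <= Y by apply: enorm_ge0.
  rewrite -subr_gt0.
  have -> : (1 - k ^+ 2) / (1 + k ^+ 2) * B + 2 * k / (1 + k ^+ 2) * Om - s
     = ((B - s) * (1 + k^+2) - 2 * k^+2 * B + 2 * k * Om) / (1 + k^+2) by field.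
  apply: divr_gt0 => //.
  have kk2 : 0 <= k - k^+2.
    have -> : k - k^+2 = k * (1 - k) by ring.
    apply: mulr_ge0; lra.
  have p1 : 0 <= k^+2 * (Y - B) by apply: mulr_ge0; [apply: sqr_ge0|lra].
  have p2 : 0 <= (k - k^+2) * Y by apply: mulr_ge0.
  have p3 : 0 <= k * (Om + Y) by apply: mulr_ge0; lra.
  have p4 : 0 <= k^+2 * (B - s) by apply: mulr_ge0; [apply: sqr_ge0|lra].
  lra.
Qed.

End V7.

Section V8.
Variable R : realType.
Implicit Types (N : nat).

Lemma perturb m (d y b0 : 'rV[R]_m) (mu s : R) :
  (1 < m)%N -> 0 < enorm d -> - enorm d <= mu -> mu < enorm d ->
  dotv b0 b0 = 1 -> dotv d b0 <= - mu -> s < dotv b0 y ->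
  exists b, [/\ dotv b b = 1, dotv d b < - mu & s < dotv b y].
Proof.
move=> hm Dp mD Dm b1 dbl sb.
have [lt|ge] := ltrP (dotv d b0) (- mu); first by exists b0.
have db : dotv d b0 = - mu by apply/le_anti; rewrite dbl ge.
set D := enorm d in Dp mD Dm.
have dD : dotv d d = D^+2 by rewrite enorm_sq.
have Dn0 : D != 0 by rewrite gt_eqF.
set w0 := (- mu / D) *: b0 - D^-1 *: d.
have w0b : dotv b0 w0 = 0.
  rewrite /w0 !(dotvBr, dotvZr) b1 (dotvC b0 d) db; field; done.
have w0w0 : dotv w0 w0 = (D^+2 - mu^+2) / D^+2.
  rewrite /w0 !(dotvBl, dotvBr, dotvZl, dotvZr) b1 db dD (dotvC b0 d) db; field; done.
have dw0 : dotv d w0 = - (D^+2 - mu^+2) / D.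
  rewrite /w0 !(dotvBr, dotvZr) db dD; field; done.
have [w [w1 bw hdw]] : exists w, [/\ dotv w w = 1, dotv b0 w = 0 &
    (dotv d w < 0 \/ (dotv d w = 0 /\ mu < 0))].
  have [pos|npos] := ltrP 0 (D^+2 - mu^+2).
    have wp : 0 < dotv w0 w0 by rewrite w0w0 divr_gt0 // exprn_gt0.
    exists ((Num.sqrt (dotv w0 w0))^-1 *: w0); split.
    - exact: normalize.
    - by rewrite dotvZr w0b mulr0.
    - left; rewrite dotvZr dw0 pmulr_rlt0 ?invr_gt0 ?sqrtr_gt0 //.
      by rewrite mulNr oppr_lt0 divr_gt0.
  have mu0 : mu < 0.
    rewrite ltNge; apply/negP => m0.
    have : mu^+2 < D^+2 by rewrite ltr_pXn2r // ?nnegrE // ltW.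
    lra.
  have z : dotv w0 w0 = 0.
    apply/le_anti; rewrite dotv_ge0 andbT w0w0.
    by apply: mulr_le0_ge0 => //; rewrite invr_ge0 exprn_ge0 // ltW.
  have w00 := dotv_eq0 z.
  have [w [w1 bw]] := perp b0 hm.
  exists w; split=> //; right; split=> //.
  have : dotv w0 w = 0 by rewrite w00 dotv0l.
  rewrite /w0 !(dotvBl, dotvZl) bw mulr0 add0r => /eqP.
  by rewrite oppr_eq0 mulf_eq0 invr_eq0 (negbTE Dn0) /= => /eqP.
set g := dotv b0 y - s.
have gp : 0 < g by rewrite subr_gt0.
set Y := enorm y.
have Y0 : 0 <= Y by apply: enorm_ge0.
have Yp : 0 < 8 * Y + 1 by lra.
have [k1 [k1p k1a k1b]] := small2 (a := 1) (b := g / (8 * Y + 1)) ltr01 (divr_gt0 gp Yp).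
have kg : forall k, 0 < k -> k <= k1 -> 4 * k * Y < g.
  move=> k kp kk.
  have : k * (8 * Y + 1) <= g by rewrite -ler_pdivlMr //; apply: le_trans k1b.
  have : 0 <= k * Y by apply: mulr_ge0; lra.
  lra.
apply: (rot_step b1 w1 bw db sb).
case: hdw => [dwn|[dw0' m0]].
  have hb : 0 < - dotv d w / (`|mu| + 1) by rewrite divr_gt0 // ?oppr_gt0 // ltr_pwDr.
  have [k [kp ka kb]] := small2 k1p hb.
  exists k; split=> //; [lra|exact: kg|].
  have : k * (`|mu| + 1) <= - dotv d w by rewrite -ler_pdivlMr // ltr_pwDr.
  have : mu * k <= `|mu| * k by apply: ler_wpM2r; [lra|apply: ler_norm].
  lra.
exists k1; split=> //; first exact: kg.
by rewrite dw0' addr0 pmulr_llt0.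
Qed.

End V8.

Section V9.
Variable R : realType.
Implicit Types (N : nat).

Lemma ball_in n m (lam : 'rV[R]_n) (G : set 'rV[R]_m) (C' : set 'rV[R]_(n + m))
    beta s q :
  enorm lam = 1 -> (forall b, G b -> enorm b = 1) -> dotv beta beta = 1 -> 0 < s ->
  convex_set C' -> C_G lam G `<=` C' -> C' q -> 0 < fb lam beta q ->
  exists2 r, 0 < r & eball (row_mx (s *: lam) (s *: beta)) r `<=` C'.
Proof.
move=> l1 Gu b1 sp cvx sub Cq gp.
have l1' : dotv lam lam = 1 by apply/enorm1.
set p0 := row_mx (s *: lam) (s *: beta).
set g := fb lam beta q in gp.
set yq := rsubmx q.
set Y2 := dotv yq yq + 1.
have Y2p : 0 < Y2 by rewrite /Y2 ltr_pwDr ?dotv_ge0.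
have sgp : 0 < s * g by apply: mulr_gt0.
set th := s * g / (Y2 + s * g).
have thp : 0 < th by rewrite divr_gt0 // addr_gt0.
have th1 : th < 1.
  rewrite /th ltr_pdivrMr; last by rewrite addr_gt0.
  lra.
have thY : th * Y2 <= s * g.
  rewrite /th mulrAC ler_pdivrMr; last by apply: addr_gt0.
  have : 0 <= (s * g) * (s * g) by apply: mulr_ge0; lra.
  lra.
exists (th * g / 4); first by apply: divr_gt0 => //; apply: mulr_gt0.
move=> z /= hz.
have th1n : 1 - th != 0 by rewrite subr_eq0 eq_sym lt_eqF.
have th1p : 0 < 1 - th by lra.
set c := (1 - th)^-1 *: (z - th *: q).
have Cc : C_G lam G c.
  move=> b Gb; rewrite -/(fb lam b c).
  have bb : dotv b b = 1 by apply/enorm1; apply: Gu.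
  rewrite /c fbZ fbB fbZ.
  suff hs : fb lam b z - th * fb lam b q <= 0.
    by rewrite pmulr_rle0 // invr_gt0.
  have fz : fb lam b z = fb lam b p0 + fb lam b (z - p0) by rewrite -fbD addrC subrK.
  have fz2 := fb_le (z - p0) (l1) (Gu _ Gb).
  have fp0 : fb lam b p0 = - s + s * dotv b beta.
    by rewrite /fb /p0 row_mxKl row_mxKr !dotvZr l1'; ring.
  set de := dotv (b - beta) (b - beta).
  have hde : de = 2 - 2 * dotv b beta.
    rewrite /de !(dotvBl, dotvBr) bb b1 (dotvC beta b); ring.
  have de0 : 0 <= de by apply: dotv_ge0.
  set X := dotv (b - beta) yq.
  have fq : fb lam b q = g + X.
    by rewrite /X /g /fb dotvBl -/yq; ring.
  set t := Y2 / g.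
  have tp : 0 < t by apply: divr_gt0.
  have key0 : forall u : 'rV[R]_m, 0 <= t^+2 * dotv u u + 2 * t * dotv u yq + dotv yq yq.
    move=> u; have := dotv_ge0 (t *: u + yq).
    rewrite !(dotvDl, dotvDr, dotvZl, dotvZr) (dotvC yq u).
    move=> h; apply: le_trans h _; rewrite le_eqVlt; apply/orP; left; apply/eqP; ring.
  have key : 0 <= t^+2 * de + 2 * t * X + (Y2 - 1).
    have -> : Y2 - 1 = dotv yq yq by rewrite /Y2; ring.
    exact: key0.
  have k1 : - (2 * t * X) <= t^+2 * de + Y2 by lra.
  have k2 : - (th * X) <= th * Y2 * de / (2 * g) + th * g / 2.
    have hpos : 0 <= th / (2 * t) by apply: divr_ge0; [lra|apply: mulr_ge0; lra].
    have := ler_wpM2l hpos k1.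
    have -> : th / (2 * t) * - (2 * t * X) = - (th * X) by field; rewrite gt_eqF.
    have -> : th / (2 * t) * (t ^+ 2 * de + Y2) = th * Y2 * de / (2 * g) + th * g / 2.
      by rewrite /t; field; rewrite !gt_eqF.
    done.
  have k3 : th * Y2 * de / (2 * g) <= s * de / 2.
    rewrite ler_pdivrMr ?mulr_gt0 //.
    have := ler_wpM2r de0 thY.
    have -> : s * de / 2 * (2 * g) = s * g * de by field.
    by rewrite mulrAC.
  rewrite fq.
  have hz' : enorm (z - p0) < th * g / 4 := hz.
  have -> : th * (g + X) = th * g + th * X by ring.
  have : s * dotv b beta = s - s * de / 2 by rewrite hde; field.
  lra.
have := cvx c q (1 - th) (sub _ Cc) Cq (ltW th1p) _.
have -> : (1 - th) *: c + (1 - (1 - th)) *: q = z.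
  have -> : 1 - (1 - th) = th by ring.
  by rewrite /c scalerA mulfV // scale1r subrK.
by apply; lra.
Qed.

End V9.

Unset Implicit Arguments.

Theorem theorem8 (R : realType) (n m : nat) (a : 'rV[R]_n) (d : 'rV[R]_m)
  (xb : 'rV[R]_n) (yb : 'rV[R]_m) :
  (1 <= n)%N -> (1 < m)%N ->
  enorm a <= enorm d ->
  enorm yb < enorm xb ->
  dotv a xb + dotv d yb = -1 ->
  let lam := (enorm xb)^-1 *: xb in
  let C := C_G lam (Gset a d lam) in
  maximal_S_free_wrt (hypH a d) (S_le0 a d) C /\ einterior C (row_mx xb yb).
Proof.
move=> hn hm ad yx hH lam C.
have xp : 0 < enorm xb by apply: le_lt_trans yx; apply: enorm_ge0.
have xn0 : enorm xb != 0 by rewrite gt_eqF.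
have l1 : enorm lam = 1.
  by rewrite /lam enormZ ger0_norm ?invr_ge0 ?ltW // mulVf.
have l1' : dotv lam lam = 1 by apply/enorm1.
have lx : dotv lam xb = enorm xb.
  rewrite /lam dotvZl -enorm_sq; field; done.
have Gu : forall b, Gset a d lam b -> enorm b = 1 by move=> b [].
have Dp := Dpos ad hH.
split; last exact: interior_pt l1 Gu lx yx.
split.
- exact: C_closed l1 Gu.
- exact: C_convex.
- exact: C_Sfree hm ad l1'.
move=> C' _ cvx sub free q [C'q Hq]; split=> //.
case: (pselect (C q)) => // nCq; exfalso.
have [b0 [Gb0 fb0]] : exists b, Gset a d lam b /\ 0 < fb lam b q.
  apply: contra_notP nCq => hn' b Gb.
  rewrite leNgt; apply/negP => hlt; apply: hn'; by exists b.
set mu := dotv a lam.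
have mD : - enorm d <= mu.
  have := CSge a lam; rewrite l1 mulr1 -/mu; lra.
have ax : dotv a xb = enorm xb * mu.
  rewrite /mu /lam dotvZr; field; done.
have Dm : mu < enorm d.
  rewrite ltNge; apply/negP => hmu.
  have h1 := CSge d yb.
  have h2 : 0 <= enorm xb * (mu - enorm d) by apply: mulr_ge0; lra.
  have h3 : 0 < enorm d * (enorm xb - enorm yb) by apply: mulr_gt0; lra.
  rewrite ax in hH; lra.
have b01 : dotv b0 b0 = 1 by apply/enorm1; case: Gb0.
have db0 : dotv d b0 <= - mu by case: Gb0 => _; rewrite -/mu; lra.
have sb0 : dotv lam (lsubmx q) < dotv b0 (rsubmx q) by move: fb0; rewrite /fb; lra.
have [b [b1 db sb]] := perturb hm Dp mD Dm b01 db0 sb0.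
set ka := - (mu + dotv d b).
have kap : 0 < ka by rewrite /ka; lra.
set s0 := ka^-1.
have s0p : 0 < s0 by rewrite invr_gt0.
have fbq : 0 < fb lam b q by rewrite /fb; lra.
have [r rp hball] := ball_in l1 Gu b1 s0p cvx sub C'q fbq.
set p0 := row_mx (s0 *: lam) (s0 *: b).
have Hp0 : hypH a d p0.
  have e1 : s0 * ka = 1 by rewrite /s0 mulVf ?gt_eqF.
  have e2 : ka = - (mu + dotv d b) by [].
  rewrite e2 in e1.
  rewrite /hypH /= /p0 row_mxKl row_mxKr [dotv a _]dotvZr [dotv d _]dotvZr -/mu; lra.
have C'p0 : C' p0.
  apply: hball; rewrite /eball /= subrr.
  by rewrite /enorm dotv0l sqrtr0.
have := free; rewrite /S_free_wrt -subset0 => /(_ p0); apply.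
split.
  split=> //; split=> //; exists r => // z [hz Hz]; split=> //; exact: hball.
split=> //; split.
  rewrite /p0 row_mxKl row_mxKr [enorm (s0 *: lam)]enormZ [enorm (s0 *: b)]enormZ l1.
  have -> : enorm b = 1 by apply/enorm1.
  done.
by move: Hp0; rewrite /hypH /= => ->; lra.
Qed.
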